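(* Let $\ell,s$ be positive integers with $s\le\ell$, and let $\Omega_{s,\mathbf{i}}$ ($\mathbf{i}\in\mathbb{Z}_{\ge0}^h$, $|\mathbf{i}|\le s$) be the unique elements of $\mathcal{R}$ with $\deg_{\mathcal{H}}\Omega_{s,\mathbf{i}}\le\deg_{\mathcal{H}}\Lambda_s+|\mathbf{i}|(2g-1)$ and $\Lambda_s(\mathbf{f}-\mathbf{R})^{\mathbf{i}}=G^{|\mathbf{i}|}\Omega_{s,\mathbf{i}}$. Then for all $\mathbf{j}\in\mathbb{Z}_{\ge0}^h$ with $1\le|\mathbf{j}|\le\ell$: $$\Lambda_s\mathbf{f}^{\mathbf{j}}=\sum_{\mathbf{i}\preceq\mathbf{j}}\Omega_{s,\mathbf{i}}\binom{\mathbf{j}}{\mathbf{i}}\mathbf{R}^{\mathbf{j}-\mathbf{i}}G^{|\mathbf{i}|}\quad\text{if } 1\le|\mathbf{j}|<s,$$ $$\Lambda_s\mathbf{f}^{\mathbf{j}}\equiv\sum_{\mathbf{i}\preceq\mathbf{j},\ |\mathbf{i}|<s}\Omega_{s,\mathbf{i}}\binom{\mathbf{j}}{\mathbf{i}}\mathbf{R}^{\mathbf{j}-\mathbf{i}}G^{|\mathbf{i}|}\mod G^s\quad\text{if } s\le|\mathbf{j}|\le\ell,$$ as congruences over $\mathcal{R}$.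
   Context: Let $q$ be a prime power. The Hermitian curve over $\mathbb{F}_{q^2}$ is the smooth projective plane curve with affine equation $Y^q+Y=X^{q+1}$; it has genus $g=\tfrac12 q(q-1)$, $n=q^3$ affine rational points $P_1,\dots,P_n$ and the point at infinity $P_\infty$. Let $\mathcal{R}=\bigcup_{m\ge0}\mathcal{L}(mP_\infty)=\mathbb{F}_{q^2}[X,Y]/(Y^q+Y-X^{q+1})$ with basis $\{X^iY^j: i\ge0,0\le j<q\}$; $\deg_{\mathcal{H}} f=-v_{P_\infty}(f)$ ($v_P$ the valuation at $P$), so $\deg_{\mathcal{H}}(X^iY^j)=iq+j(q+1)$; $f\ne0$ is monic if the coefficient of its basis monomial of largest $\deg_{\mathcal{H}}$ is $1$. Fix integers $h\ge1$ and $m_{\mathrm H}$ with $2(g-1)<m_{\mathrm H}<n$. Let $\mathbf{f}=(f_1,\dots,f_h)\in\mathcal{L}(m_{\mathrm H}P_\infty)^h$ and $\mathbf{r}=\mathbf{c}+\mathbf{e}\in\mathbb{F}_{q^2}^{h\times n}$ where $\mathbf{c}$ has $i$-th row $(f_i(P_1),\dots,f_i(P_n))$; $\mathcal{E}\subseteq\{1,\dots,n\}$ is the set of indices of nonzero columns of $\mathbf{e}$. $\Lambda_s$ is the unique monic element of minimal $\deg_{\mathcal{H}}$ of $\{\Lambda\in\mathcal{R}:v_{P_i}(\Lambda)\ge s\ \forall i\in\mathcal{E}\}$. $\mathbf{R}=(R_1,\dots,R_h)\in\mathcal{R}^h$ with $\deg_{\mathcal{H}}R_i<n+2g$ and $R_i(P_j)=r_{i,j}$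 for all $i,j$; $G=X^{q^2}-X$. For $\mathbf{i},\mathbf{j}\in\mathbb{Z}_{\ge0}^h$: $|\mathbf{i}|=\sum_\mu i_\mu$; $\mathbf{i}\preceq\mathbf{j}$ iff $i_\mu\le j_\mu$ for all $\mu$; $\mathbf{a}^{\mathbf{i}}=\prod_\mu a_\mu^{i_\mu}$ for $\mathbf{a}\in\mathcal{R}^h$; $\binom{\mathbf{j}}{\mathbf{i}}=\prod_\mu\binom{j_\mu}{i_\mu}$. *)

(* Defs.v *)
(* Hermitian curve Y^q + Y = X^(q+1) over a finite field F
   with #|F| = q^2.  Elements of the coordinate ring
   R = F[X,Y]/(Y^q+Y-X^(q+1)) are represented by bivariate polynomials
   p : {poly {poly F}} (outer variable = Y, inner variable = X), and
   equality in R is congruence modulo the Hermitian polynomial. *)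
From HB Require Import structures.
From mathcomp Require Import all_boot all_order all_algebra.
Set Implicit Arguments. Unset Strict Implicit. Unset Printing Implicit Defensive.
Import Order.TTheory GRing.Theory Num.Theory.
Local Open Scope ring_scope.

Section Hermitian.
Variables (F : finFieldType) (q : nat).

Definition bipoly := {poly {poly F}}.

Definition XX : bipoly := ('X)%:P.
Definition YY : bipoly := 'X.

Definition hermH : bipoly := YY ^+ q + YY - XX ^+ q.+1.

Definition eqR (f g : bipoly) : Prop := exists k : bipoly, f - g = k * hermH.

Definition congR (M f g : bipoly) : Prop := exists t : bipoly, eqR (f - g) (M * t).

(* canonical representative in the basis X^i Y^j, j < q *)
Definition redR (f : bipoly) : bipoly := Pdiv.Ring.rmodp f hermH.

Definition coefR (f : bipoly) (i j : nat) : F := (nth 0 (redR f) j)`_i.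

Definition wH (i j : nat) : nat := (i * q + j * q.+1)%N.

(* deg_H f = max weight of a basis monomial occurring in f
   (convention: deg_H 0 = 0; only used where harmless) *)
Definition degH (f : bipoly) : nat :=
  \max_(j < q) \max_(i < size (nth (0%R : {poly F}) (redR f) j) | coefR f i j != 0%R) wH i j.

Definition monicH (f : bipoly) : Prop :=
  exists i j : nat, [/\ (j < q)%N, coefR f i j != 0, wH i j = degH f & coefR f i j = 1].

Definition onCurve (P : F * F) : bool := P.2 ^+ q + P.2 == P.1 ^+ q.+1.
Definition hpoint := {P : F * F | onCurve P}.

Definition evalP (f : bipoly) (P : F * F) : F :=
  (map_poly (fun c : {poly F} => c.[P.1]) f).[P.2].

(* v_P(f) >= s : f lies in m_P^s O_P, where O_P is the local ring at the
   (smooth) point P = (a,b) and m_P = (X - a, Y - b) O_P *)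
Definition vge (P : F * F) (s : nat) (f : bipoly) : Prop :=
  exists w : bipoly, evalP w P != 0 /\
  exists c : nat -> bipoly,
    eqR (w * f) (\sum_(k < s.+1) c k * (XX - (P.1)%:P%:P) ^+ k * (YY - (P.2)%:P%:P) ^+ (s - k)).

Definition Gpol : bipoly := XX ^+ (q ^ 2) - XX.

End Hermitian.

Definition mabs (h : nat) (i : 'I_h -> nat) : nat := (\sum_(k < h) i k)%N.
Definition mbinom (h : nat) (j i : 'I_h -> nat) : nat := (\prod_(k < h) 'C(j k, i k))%N.
Definition mpow (R : pzRingType) (h : nat) (a : 'I_h -> R) (i : 'I_h -> nat) : R :=
  \prod_(k < h) a k ^+ i k.

(* Main.v *)
Require Import Defs.
From HB Require Import structures.
From mathcomp Require Import all_boot all_order all_algebra.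
From mathcomp Require Import ring.
Import Order.TTheory GRing.Theory Num.Theory.
Local Open Scope ring_scope.

Section Aux.
Variables (F : finFieldType) (q : nat).

Definition inI (M x : bipoly F) := exists t k : bipoly F, x = M * t + k * hermH F q.

Lemma inI0 M : inI M 0.
Proof. by exists 0, 0; rewrite !mulr0 mul0r addr0. Qed.

Lemma inID M x y : inI M x -> inI M y -> inI M (x + y).
Proof.
move=> [t1 [k1 ->]] [t2 [k2 ->]]; exists (t1 + t2), (k1 + k2).
move: (hermH F q) => H; ring.
Qed.

Lemma inIMr M x c : inI M x -> inI M (x * c).
Proof.
move=> [t [k ->]]; exists (t * c), (k * c); move: (hermH F q) => H; ring.
Qed.

Lemma inI_sum M (I : Type) (r : seq I) (P : pred I) (G : I -> bipoly F) :
  (forall i, P i -> inI M (G i)) -> inI M (\sum_(i <- r | P i) G i).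
Proof.
move=> HG; apply: (big_ind (inI M)) => //; [exact: inI0 | exact: inID].
Qed.

Lemma inI_eqR M x y : eqR q x y -> inI M (x - y).
Proof. by move=> [k ->]; exists 0, k; rewrite mulr0 add0r. Qed.

End Aux.

Lemma expand (R : comNzRingType) h l (d b : 'I_h -> R) (j : 'I_h -> nat)
  (Hj : forall k, (j k <= l)%N) :
  mpow (fun k => d k + b k) j =
  \sum_(phi : {ffun 'I_h -> 'I_l.+1} | [forall k, (phi k <= j k)%N])
     (mpow d (fun k => phi k) * mpow b (fun k => (j k - phi k)%N))
       *+ mbinom j (fun k => phi k).
Proof.
rewrite /mpow.
transitivity (\prod_k \sum_(i < l.+1) d k ^+ i * b k ^+ (j k - i) *+ 'C(j k, i)).
  apply eq_bigr => k _; rewrite addrC exprDn.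
  rewrite (big_ord_widen l.+1 (fun i => b k ^+ (j k - i) * d k ^+ i *+ 'C(j k, i)));
    last by rewrite ltnS Hj.
  rewrite big_mkcond; apply eq_bigr => i _; case: ifP => hi; first by rewrite mulrC.
  by rewrite bin_small ?mulr0n // ltnNge -ltnS hi.
rewrite bigA_distr_bigA (bigID (fun phi : {ffun 'I_h -> 'I_l.+1} => [forall k, (phi k <= j k)%N])) /=.
rewrite [X in _ + X]big1 ?addr0.
  apply eq_bigr => phi _; rewrite prodrMn big_split //.
move=> phi /forallPn [k]; rewrite -ltnNge => hk.
by rewrite (bigD1 k) //= bin_small // mulr0n mul0r.
Qed.

Lemma sub_mindex h (phi : 'I_h -> nat) n : (n <= mabs phi)%N ->
  exists psi : 'I_h -> nat, (forall k, psi k <= phi k)%N /\ mabs psi = n.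
Proof.
elim: n => [|n IH] hn.
  by exists (fun _ => 0%N); split => //; rewrite /mabs big1.
have [psi [hle hs]] := IH (ltnW hn).
case: (pickP (fun k => psi k < phi k)%N) => [k hk | hnone]; last first.
  exfalso; suff : (mabs phi <= mabs psi)%N by rewrite hs leqNgt hn.
  by apply: leq_sum => k _; move: (hnone k) => /= /negbT; rewrite -leqNgt.
exists (fun k' => if k' == k then (psi k').+1 else psi k'); split.
  by move=> k'; case: eqP => [->|]//.
move: hs; rewrite /mabs (bigD1 k) //= => hs; rewrite (bigD1 k) //= eqxx addSn -hs.
congr (_ + _).+1; apply eq_bigr => k' /negbTE ->; done.
Qed.

Lemma mpow_split (R : comNzRingType) h (d : 'I_h -> R) (phi psi : 'I_h -> nat) :
  (forall k, psi k <= phi k)%N ->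
  mpow d phi = mpow d psi * mpow d (fun k => (phi k - psi k)%N).
Proof.
move=> hle; rewrite /mpow -big_split; apply eq_bigr => k _.
by rewrite /= -exprD subnKC.
Qed.

Lemma mabs_le h (a b : 'I_h -> nat) : (forall k, a k <= b k)%N -> (mabs a <= mabs b)%N.
Proof. by move=> H; apply: leq_sum => k _. Qed.

Arguments inI0 {F q}. Arguments inID {F q M x y}. Arguments inIMr {F q M x} c.
Arguments inI_sum {F q M I r P G}. Arguments inI_eqR {F q} M {x y}.
Arguments expand {R h l d b j}. Arguments sub_mindex {h phi n}.
Arguments mpow_split {R h} d {phi psi}. Arguments mabs_le {h a b}.

Theorem theorem2
  (F : finFieldType) (q : nat)
  (Hq : exists p k : nat, [/\ prime p, (0 < k)%N & q = (p ^ k)%N])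
  (HF : #|F| = (q ^ 2)%N)
  (h mH : nat) (Hh : (1 <= h)%N)
  (HmH : (2 * ((q * (q - 1)) %/ 2 - 1) < mH < q ^ 3)%N)
  (f : 'I_h -> bipoly F) (Hf : forall k, (degH q (f k) <= mH)%N)
  (r e : 'I_h -> hpoint F q -> F)
  (Hr : forall k P, r k P = evalP (f k) (val P) + e k P)
  (Rr : 'I_h -> bipoly F)
  (HRdeg : forall k, (degH q (Rr k) < q ^ 3 + 2 * ((q * (q - 1)) %/ 2))%N)
  (HRval : forall k P, evalP (Rr k) (val P) = r k P)
  (l s : nat) (Hs : (0 < s)%N) (Hsl : (s <= l)%N)
  (Lam : bipoly F)
  (HLam_in : forall P : hpoint F q, (exists k, e k P != 0) -> vge q (val P) s Lam)
  (HLam_monic : monicH q Lam)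
  (HLam_min : forall L : bipoly F, ~ eqR q L 0 ->
      (forall P : hpoint F q, (exists k, e k P != 0) -> vge q (val P) s L) ->
      (degH q Lam <= degH q L)%N)
  (Om : ('I_h -> nat) -> bipoly F)
  (HOm : forall i : 'I_h -> nat, (mabs i <= s)%N ->
      (degH q (Om i) <= degH q Lam + mabs i * (2 * ((q * (q - 1)) %/ 2) - 1))%N /\
      eqR q (Lam * mpow (fun k => f k - Rr k) i) (Gpol F q ^+ mabs i * Om i)) :
  forall j : 'I_h -> nat, (1 <= mabs j <= l)%N ->
    ((mabs j < s)%N ->
      eqR q (Lam * mpow f j)
        (\sum_(i : {ffun 'I_h -> 'I_l.+1} | [forall k, (i k <= j k)%N])
            Om (fun k => i k) * (mbinom j (fun k => i k))%:R
            * mpow Rr (fun k => (j k - i k)%N) * Gpol F q ^+ mabs (fun k => i k)))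
    /\
    ((s <= mabs j)%N ->
      congR q (Gpol F q ^+ s) (Lam * mpow f j)
        (\sum_(i : {ffun 'I_h -> 'I_l.+1} |
                 [forall k, (i k <= j k)%N] && (mabs (fun k => i k) < s)%N)
            Om (fun k => i k) * (mbinom j (fun k => i k))%:R
            * mpow Rr (fun k => (j k - i k)%N) * Gpol F q ^+ mabs (fun k => i k))).
Proof.
move=> j /andP [j1 jl].
have Hj : forall k, (j k <= l)%N.
  by move=> k; apply: leq_trans jl; rewrite /mabs (bigD1 k) //= leq_addr.
set d := fun k => f k - Rr k.
have Ef : mpow f j = mpow (fun k => d k + Rr k) j.
  by rewrite /mpow; apply eq_bigr => k _; rewrite /d subrK.
set G := Gpol F q.
have K1 : forall (M : bipoly F) (phi : {ffun 'I_h -> 'I_l.+1}), (mabs (fun k => phi k) <= s)%N ->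
   inI F q M (Lam * (mpow d (fun k => phi k) * mpow Rr (fun k => (j k - phi k)%N)
                     *+ mbinom j (fun k => phi k))
            - Om (fun k => phi k) * (mbinom j (fun k => phi k))%:R
              * mpow Rr (fun k => (j k - phi k)%N) * G ^+ mabs (fun k => phi k)).
  move=> M phi hphi; have [_ hE] := HOm _ hphi.
  have := inIMr (mpow Rr (fun k => (j k - phi k)%N) * (mbinom j (fun k => phi k))%:R)
            (inI_eqR M hE).
  congr inI; rewrite -[(_ * _) *+ _]mulr_natr /d.
  move: (G ^+ _) ((mbinom _ _)%:R) (mpow _ (fun k => nat_of_ord (phi k))) (mpow Rr _) => Ga c A B.
  ring.
have K2 : forall (phi : {ffun 'I_h -> 'I_l.+1}), (s <= mabs (fun k => phi k))%N ->
   inI F q (G ^+ s) (Lam * (mpow d (fun k => phi k) * mpow Rr (fun k => (j k - phi k)%N)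
                     *+ mbinom j (fun k => phi k))).
  move=> phi hphi; have [psi [hle hpsi]] := sub_mindex hphi.
  have [_ [k hk]] := HOm psi (eq_leq hpsi).
  rewrite hpsi in hk.
  exists (Om psi * (mpow d (fun k => (phi k - psi k)%N) * mpow Rr (fun k => (j k - phi k)%N)
           *+ mbinom j (fun k => phi k))),
         (k * (mpow d (fun k => (phi k - psi k)%N) * mpow Rr (fun k => (j k - phi k)%N)
           *+ mbinom j (fun k => phi k))).
  rewrite (mpow_split d hle).
  move: hk; rewrite /G.
  move: (hermH F q) (Gpol F q ^+ s) (mpow d psi) (mpow d (fun k => (phi k - psi k)%N))
    (mpow Rr (fun k => (j k - phi k)%N)) (mbinom j (fun k => phi k)) => H Gs A1 A2 B n hk.
  rewrite !(mulrnAr, mulrnAl) -mulrnDl; congr (_ *+ _).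
  have eL : Lam * A1 = Gs * Om psi + k * H by rewrite -hk; ring.
  rewrite !mulrA eL; ring.
split.
  move=> hlt; rewrite Ef (expand Hj) mulr_sumr.
  have : inI F q 0 (\sum_(i : {ffun 'I_h -> 'I_l.+1} | [forall k, (i k <= j k)%N])
    (Lam * (mpow d (fun k => i k) * mpow Rr (fun k => (j k - i k)%N)
                     *+ mbinom j (fun k => i k))
            - Om (fun k => i k) * (mbinom j (fun k => i k))%:R
              * mpow Rr (fun k => (j k - i k)%N) * G ^+ mabs (fun k => i k))).
    apply: inI_sum => phi /forallP hphi; apply: K1.
    apply: leq_trans (ltnW hlt); exact: mabs_le.
  rewrite sumrB => -[t [k hk]]; exists k; rewrite hk mul0r add0r //.
move=> hge.
have : inI F q (G ^+ s) (Lam * mpow f j - \sum_(i : {ffun 'I_h -> 'I_l.+1} |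
                 [forall k, (i k <= j k)%N] && (mabs (fun k => i k) < s)%N)
            Om (fun k => i k) * (mbinom j (fun k => i k))%:R
            * mpow Rr (fun k => (j k - i k)%N) * G ^+ mabs (fun k => i k)).
  rewrite Ef (expand Hj) mulr_sumr.
  rewrite (bigID (fun i : {ffun 'I_h -> 'I_l.+1} => (mabs (fun k => i k) < s)%N)) /=.
  rewrite addrAC -sumrB; apply: inID.
    by apply: inI_sum => phi /andP [_ hphi]; apply: K1; exact: ltnW.
  by apply: inI_sum => phi /andP [_ hphi]; apply: K2; rewrite leqNgt.
move=> -[t [k hk]]; exists t, k; rewrite hk /G.
move: (hermH F q) (Gpol F q ^+ s) => H Gs; ring.
Qed.
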